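(* Let $G$ be a game all of whose options are numbers, with $L(G)\neq\emptyset$ and $R(G)\neq\emptyset$. Then there are numbers $a,b$ in canonical form such that $G\triangleq\{a\mid b\}$.
   Context: Games are short normal-play combinatorial games, written $G\cong\{L(G)\mid R(G)\}$. A number is a game $G$ with $G^L<G<G^R$ for all $G^L\in L(G)$, $G^R\in R(G)$; every game has a unique simplest representative of its value, its canonical form. Disjunctive sum and negation are the usual ones: $G+H\cong\{L(G)+H,G+L(H)\mid R(G)+H,G+R(H)\}$, $-G\cong\{-R(G)\mid-L(G)\}$. Equivalence modulo domination: $G\triangleq H$ means that in $G+(-H)$, for every move by either player as first player in one summand, the other player has a response in the other summand after which the responder wins. *)

(* Defs.v *)
From Stdlib Require List.
From mathcomp Require Import all_boot.
Set Implicit Arguments. Unset Strict Implicit. Unset Printing Implicit Defensive.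

Inductive game : Type := Game : seq game -> seq game -> game.

Definition Lopts (G : game) : seq game := let: Game L _ := G in L.
Definition Ropts (G : game) : seq game := let: Game _ R := G in R.

Definition zero : game := Game [::] [::].

Fixpoint neg (G : game) : game :=
  match G with Game L R => Game (map neg R) (map neg L) end.

Fixpoint add (G : game) : game -> game :=
  fix addG (H : game) : game :=
    match G, H with
    | Game GL GR, Game HL HR =>
        Game (map (fun gl => add gl H) GL ++ map addG HL)
             (map (fun gr => add gr H) GR ++ map addG HR)
    end.

(* Normal play outcomes.
   lfirst G : Left, moving first in G, has a winning strategy.
   rfirst G : Right, moving first in G, has a winning strategy. *)
Fixpoint lfirst (G : game) : bool :=
  match G with
  | Game L _ => has (fun gl => match gl with Game _ GLR => all lfirst GLR end) L
  end.

Fixpoint rfirst (G : game) : bool :=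
  match G with
  | Game _ R => has (fun gr => match gr with Game GRL _ => all rfirst GRL end) R
  end.

(* Left wins G moving second (Right starts); Right wins G moving second. *)
Definition lsecond (G : game) : bool := all lfirst (Ropts G).
Definition rsecond (G : game) : bool := all rfirst (Lopts G).

Definition gle (G H : game) : bool := rsecond (add G (neg H)).
Definition glt (G H : game) : bool := gle G H && ~~ gle H G.

Definition is_number (G : game) : bool :=
  all (fun gl => glt gl G) (Lopts G) && all (fun gr => glt G gr) (Ropts G).

Definition no_dominated_left (G : game) : bool :=
  let L := Lopts G in
  [forall i : 'I_(size L), forall j : 'I_(size L),
      (i != j) ==> ~~ gle (nth zero L i) (nth zero L j)].

Definition no_dominated_right (G : game) : bool :=
  let R := Ropts G in
  [forall i : 'I_(size R), forall j : 'I_(size R),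
      (i != j) ==> ~~ gle (nth zero R j) (nth zero R i)].

Definition no_reversible (G : game) : bool :=
  all (fun gl => ~~ has (fun glr => gle glr G) (Ropts gl)) (Lopts G) &&
  all (fun gr => ~~ has (fun grl => gle G grl) (Lopts gr)) (Ropts G).

Fixpoint canonical (G : game) : bool :=
  match G with
  | Game L R =>
      [&& all canonical L, all canonical R,
          no_dominated_left G, no_dominated_right G & no_reversible G]
  end.

(* Equivalence modulo domination G ≜ H: in G + (-H), for every move by either
   player as first player in one summand, the other player has a response in
   the other summand after which the responder wins (the original mover being
   then to move). *)
Definition eqdom (G H : game) : Prop :=
  (forall gl, List.In gl (Lopts G) ->
     exists2 r, List.In r (Ropts (neg H)) & rsecond (add gl r)) /\
  (forall l, List.In l (Lopts (neg H)) ->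
     exists2 gr, List.In gr (Ropts G) & rsecond (add gr l)) /\
  (forall gr, List.In gr (Ropts G) ->
     exists2 l, List.In l (Lopts (neg H)) & lsecond (add gr l)) /\
  (forall r, List.In r (Ropts (neg H)) ->
     exists2 gl, List.In gl (Lopts G) & lsecond (add gl r)).

(* Main.v *)
Require Import Defs.
From Stdlib Require List.
From HB Require Import structures.
From mathcomp Require Import all_boot zify.
Set Implicit Arguments. Unset Strict Implicit. Unset Printing Implicit Defensive.

Section Ind.
Variable P : game -> Prop.
Hypothesis HP : forall L R, (forall x, List.In x L -> P x) -> (forall x, List.In x R -> P x) -> P (Game L R).
Fixpoint game_ind2 (g : game) : P g :=
  match g with
  | Game L R => HP
      ((fix fl (s : seq game) : forall x, List.In x s -> P x :=
         match s with
         | [::] => fun x (h : List.In x [::]) => match h with end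
         | y :: s' => fun x h => match h with
                      | or_introl e => eq_ind y P (game_ind2 y) x e
                      | or_intror h' => fl s' x h' end
         end) L)
      ((fix fl (s : seq game) : forall x, List.In x s -> P x :=
         match s with
         | [::] => fun x (h : List.In x [::]) => match h with end
         | y :: s' => fun x h => match h with
                      | or_introl e => eq_ind y P (game_ind2 y) x e
                      | or_intror h' => fl s' x h' end
         end) R)
  end.
End Ind.

Fixpoint enc (g : game) : GenTree.tree unit :=
  match g with Game L R => GenTree.Node 0 [:: GenTree.Node 0 (map enc L); GenTree.Node 0 (map enc R)] end.
Fixpoint dec (t : GenTree.tree unit) : game :=
  match t with
  | GenTree.Node _ [:: GenTree.Node _ l; GenTree.Node _ r] => Game (map dec l) (map dec r)
  | _ => zero
  end.
Lemma map_In_id (f : game -> game) (s : seq game) : (forall x, List.In x s -> f x = x) -> map f s = s.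
Proof. elim: s => //= y s IH H; rewrite H ?IH //; [move=> x hx; apply: H; by right | by left]. Qed.
Lemma encK : cancel enc dec.
Proof.
elim/game_ind2 => L R HL HR /=; rewrite -!map_comp !map_In_id //.
Qed.
HB.instance Definition _ := Countable.copy game (can_type encK).

Lemma InP (x : game) s : List.In x s <-> x \in s.
Proof. elim: s => //= y s IH; rewrite in_cons; split.
- by case=> [->|/IH ->]; rewrite ?eqxx ?orbT.
- by case/orP => [/eqP ->|/IH]; [left|right].
Qed.

Fixpoint gsize (g : game) : nat :=
  match g with Game L R => (sumn (map gsize L) + sumn (map gsize R)).+1 end.

Lemma sumn_map_le (T : eqType) (f : T -> nat) x s : x \in s -> f x <= sumn (map f s).
Proof. elim: s => //= y s IH; rewrite in_cons => /orP [/eqP ->|/IH h]; first exact: leq_addr.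
by rewrite (leq_trans h) // leq_addl. Qed.

Lemma sizeL g x : x \in Lopts g -> gsize x < gsize g.
Proof. case: g => L R /= h; by rewrite ltnS (leq_trans (sumn_map_le gsize h)) // leq_addr. Qed.
Lemma sizeR g x : x \in Ropts g -> gsize x < gsize g.
Proof. case: g => L R /= h; by rewrite ltnS (leq_trans (sumn_map_le gsize h)) // leq_addl. Qed.

Lemma LoptsE L R : Lopts (Game L R) = L. Proof. by []. Qed.
Lemma RoptsE L R : Ropts (Game L R) = R. Proof. by []. Qed.

Lemma lfirstE g : lfirst g = has lsecond (Lopts g).
Proof. case: g => L R /=; apply: eq_has => -[] //. Qed.
Lemma rfirstE g : rfirst g = has rsecond (Ropts g).
Proof. case: g => L R /=; apply: eq_has => -[] //. Qed.

Lemma duality g : lfirst g = ~~ rsecond g /\ rfirst g = ~~ lsecond g.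
Proof.
elim/game_ind2: g => L R HL HR; rewrite lfirstE rfirstE /rsecond /lsecond /=; split.
- rewrite -has_predC; apply: eq_in_has => x /InP /HL [_ h] /=; by rewrite h negbK.
- rewrite -has_predC; apply: eq_in_has => x /InP /HR [h _] /=; by rewrite h negbK.
Qed.

Lemma rsecondE g : rsecond g = all (fun l => ~~ lsecond l) (Lopts g).
Proof. rewrite /rsecond; apply: eq_all => x; by case: (duality x). Qed.
Lemma lsecondE g : lsecond g = all (fun r => ~~ rsecond r) (Ropts g).
Proof. rewrite /lsecond; apply: eq_all => x; by case: (duality x). Qed.

Lemma neg_Lopts g : Lopts (neg g) = map neg (Ropts g). Proof. by case: g. Qed.
Lemma neg_Ropts g : Ropts (neg g) = map neg (Lopts g). Proof. by case: g. Qed.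
Lemma add_Lopts x y : Lopts (add x y) = map (fun l => add l y) (Lopts x) ++ map (add x) (Lopts y).
Proof. by case: x; case: y. Qed.
Lemma add_Ropts x y : Ropts (add x y) = map (fun r => add r y) (Ropts x) ++ map (add x) (Ropts y).
Proof. by case: x; case: y. Qed.

Lemma negK : involutive neg.
Proof. elim/game_ind2 => L R HL HR /=; rewrite -!map_comp !map_In_id //. Qed.

Lemma neg_rsecond g : rsecond (neg g) = lsecond g /\ lsecond (neg g) = rsecond g.
Proof.
elim/game_ind2: g => L R HL HR; split.
- rewrite (rsecondE (neg _)) (lsecondE (Game _ _)) /= all_map; apply: eq_in_all => x /InP /HR [_ h] /=; by rewrite h.
- rewrite (lsecondE (neg _)) (rsecondE (Game _ _)) /= all_map; apply: eq_in_all => x /InP /HL [h _] /=; by rewrite h.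
Qed.

Lemma gE g : g = Game (Lopts g) (Ropts g). Proof. by case: g. Qed.

Lemma neg_add x y : neg (add x y) = add (neg x) (neg y).
Proof.
move: {2}(gsize x + gsize y) (leqnn (gsize x + gsize y)) => n.
elim: n x y => [|n IH] x y hs.
  by move: hs; case: x => ? ? /=; rewrite addSn.
rewrite (gE (neg (add x y))) (gE (add (neg x) (neg y))) neg_Lopts neg_Ropts.
rewrite !add_Lopts !add_Ropts !neg_Lopts !neg_Ropts !map_cat -!map_comp.
congr (Game (_ ++ _) (_ ++ _)); apply/eq_in_map => a ha /=; apply: IH;
  rewrite -ltnS (leq_trans _ hs) // ?ltn_add2r ?ltn_add2l.
- exact: sizeR.
- exact: sizeR.
- exact: sizeL.
- exact: sizeL.
Qed.

Lemma comm_out n a b : gsize a + gsize b <= n ->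
  rsecond (add a b) = rsecond (add b a) /\ lsecond (add a b) = lsecond (add b a).
Proof.
elim: n a b => [|n IH] a b hs.
  by move: hs; case: a => ? ? /=; rewrite addSn.
split.
- rewrite !rsecondE !add_Lopts !all_cat !all_map andbC; congr andb;
  apply/eq_in_all => t ht /=; congr negb.
  + have [] // := IH a t; rewrite -ltnS (leq_trans _ hs) // ltn_add2l; exact: sizeL.
  + have [] // := IH t b; rewrite -ltnS (leq_trans _ hs) // ltn_add2r; exact: sizeL.
- rewrite !lsecondE !add_Ropts !all_cat !all_map andbC; congr andb;
  apply/eq_in_all => t ht /=; congr negb.
  + have [] // := IH a t; rewrite -ltnS (leq_trans _ hs) // ltn_add2l; exact: sizeR.
  + have [] // := IH t b; rewrite -ltnS (leq_trans _ hs) // ltn_add2r; exact: sizeR.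
Qed.

Lemma rsec_comm a b : rsecond (add a b) = rsecond (add b a).
Proof. by case: (@comm_out _ a b (leqnn _)). Qed.

Lemma lsec_add_neg x y : lsecond (add x (neg y)) = gle y x.
Proof. by rewrite /gle -(neg_rsecond _).1 neg_add negK rsec_comm. Qed.

Lemma gle_char x y : gle x y =
  all (fun xl => ~~ gle y xl) (Lopts x) && all (fun yr => ~~ gle yr x) (Ropts y).
Proof.
rewrite {1}/gle rsecondE add_Lopts all_cat neg_Lopts !all_map.
by congr andb; apply/eq_in_all => t _ /=; rewrite lsec_add_neg.
Qed.

Lemma gle_L x y xl : gle x y -> xl \in Lopts x -> ~~ gle y xl.
Proof. by rewrite gle_char => /andP [/allP h _] /h. Qed.
Lemma gle_R x y yr : gle x y -> yr \in Ropts y -> ~~ gle yr x.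
Proof. by rewrite gle_char => /andP [_ /allP h] /h. Qed.
Lemma gleI x y : (forall xl, xl \in Lopts x -> ~~ gle y xl) ->
  (forall yr, yr \in Ropts y -> ~~ gle yr x) -> gle x y.
Proof. by move=> h1 h2; rewrite gle_char; apply/andP; split; apply/allP. Qed.

Lemma gle_refl x : gle x x.
Proof.
elim/game_ind2: x => L R HL HR; apply: gleI => t /InP ht.
- apply/negP => /gle_L /(_ (proj1 (InP _ _) ht)) /=; by rewrite HL.
- apply/negP => /gle_R /(_ (proj1 (InP _ _) ht)) /=; by rewrite HR.
Qed.

Lemma notgle_L x xl : xl \in Lopts x -> ~~ gle x xl.
Proof. move=> h; exact: (gle_L (gle_refl x) h). Qed.
Lemma notgle_R x xr : xr \in Ropts x -> ~~ gle xr x.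
Proof. move=> h; exact: (gle_R (gle_refl x) h). Qed.

Lemma gle_trans_n n x y z : gsize x + gsize y + gsize z <= n ->
  gle x y -> gle y z -> gle x z.
Proof.
elim: n x y z => [|n IH] x y z hs.
  by move: hs; case: x => ? ? /=; rewrite !addSn.
move=> hxy hyz; apply: gleI => t ht; apply/negP => h.
- have : gle y t.
    apply: (IH y z t) => //; rewrite -ltnS (leq_trans _ hs) //.
    have := sizeL ht; lia.
  by move: (gle_L hxy ht) => /negP.
- have : gle t y.
    apply: (IH t x y) => //; rewrite -ltnS (leq_trans _ hs) //.
    have := sizeR ht; lia.
  by move: (gle_R hyz ht) => /negP.
Qed.

Lemma gle_trans y x z : gle x y -> gle y z -> gle x z.
Proof. exact: gle_trans_n (leqnn _). Qed.

Lemma gle_mono x y :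
  (forall xl, xl \in Lopts x -> exists2 yl, yl \in Lopts y & gle xl yl) ->
  (forall yr, yr \in Ropts y -> exists2 xr, xr \in Ropts x & gle xr yr) -> gle x y.
Proof.
move=> h1 h2; apply: gleI => t ht; apply/negP => h.
- case: (h1 _ ht) => yl hyl hle.
  by move: (notgle_L hyl); rewrite (gle_trans h hle).
- case: (h2 _ ht) => xr hxr hle.
  by move: (notgle_R hxr); rewrite (gle_trans hle h).
Qed.

Fixpoint w (g : game) : nat :=
  match g with Game L R =>
    (sumn (map (fun r => match r with Game rl _ => sumn (map w rl) end) R) +
     sumn (map (fun l => match l with Game _ lr => sumn (map w lr) end) L)).+1 end.

Lemma w_bypassL xl xlr : xlr \in Ropts xl -> sumn (map w (Lopts xlr)) < w xl.
Proof.
case: xl => L R /= h; rewrite ltnS.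
apply: leq_trans (leq_addr _ _).
apply: leq_trans (sumn_map_le (fun r => match r with Game rl _ => sumn (map w rl) end) h).
by case: xlr {h}.
Qed.
Lemma w_bypassR xr xrl : xrl \in Lopts xr -> sumn (map w (Ropts xrl)) < w xr.
Proof.
case: xr => L R /= h; rewrite ltnS.
apply: leq_trans (leq_addl _ _).
apply: leq_trans (sumn_map_le (fun l => match l with Game _ lr => sumn (map w lr) end) h).
by case: xrl {h}.
Qed.
Lemma w_pos g : 0 < w g. Proof. by case: g. Qed.

Definition mu g := sumn (map w (Lopts g)) + sumn (map w (Ropts g)).

Definition del (i : nat) (s : seq game) := take i s ++ drop i.+1 s.
Lemma del_perm i s : i < size s -> perm_eq s (nth zero s i :: del i s).
Proof.
move=> hi; rewrite -{1}(cat_take_drop i s) (drop_nth zero hi) /del.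
by rewrite -cat1s perm_catCA.
Qed.
Lemma del_sub i s x : x \in del i s -> x \in s.
Proof.
rewrite /del mem_cat => /orP [/mem_take //|h].
rewrite -(cat_take_drop i.+1 s) mem_cat h orbT //.
Qed.
Lemma del_mem i j s : j < size s -> j != i -> nth zero s j \in del i s.
Proof.
move=> hj hij; rewrite /del mem_cat.
case: (ltnP j i) => h.
- by rewrite -(nth_take zero h) mem_nth // size_take; case: ifP => // _; lia.
- have hj' : i.+1 <= j by rewrite ltn_neqAle eq_sym hij.
  have -> : nth zero s j = nth zero (drop i.+1 s) (j - i.+1) by rewrite nth_drop subnKC.
  by rewrite mem_nth ?orbT // size_drop ltn_sub2rE.
Qed.
Lemma sum_del i s : i < size s -> sumn (map w s) = w (nth zero s i) + sumn (map w (del i s)).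
Proof. move=> h; by rewrite (perm_sumn (perm_map w (del_perm h))). Qed.

Lemma mem_rem_neq (x y : game) s : y \in s -> y != x -> y \in rem x s.
Proof.
move=> hy hne; case hx: (x \in s); last by rewrite rem_id ?hx.
by move: hy; rewrite (perm_mem (perm_to_rem hx)) in_cons (negbTE hne).
Qed.
Lemma sum_rem x s : x \in s -> sumn (map w s) = w x + sumn (map w (rem x s)).
Proof. move=> h; by rewrite (perm_sumn (perm_map w (perm_to_rem h))). Qed.

Lemma canon_opts g : canonical g -> all canonical (Lopts g) && all canonical (Ropts g).
Proof. by case: g => L R /= /and5P [-> ->]. Qed.

Notation eqv x y := (gle x y /\ gle y x).

Lemma bypassL L R xl xlr : xl \in L -> xlr \in Ropts xl -> gle xlr (Game L R) ->
  eqv (Game (rem xl L ++ Lopts xlr) R) (Game L R).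
Proof.
set y := Game L R; set y' := Game _ R => hxl hxlr hrev.
have ry : forall r, r \in R -> ~~ gle r y by move=> r hr; exact: (@notgle_R y).
have ry' : forall r, r \in R -> ~~ gle r y' by move=> r hr; exact: (@notgle_R y').
split.
- apply: gleI => t ht.
  + move: ht; rewrite /= mem_cat => /orP [/mem_rem ht|ht].
    * exact: (@notgle_L y).
    * apply/negP => h; by move: (notgle_L ht); rewrite (gle_trans hrev h).
  + exact: ry'.
- apply: gleI => t ht; last exact: ry.
  case: (eqVneq t xl) => [->|hne]; last first.
    by apply: (@notgle_L y'); rewrite /= mem_cat mem_rem_neq.
  apply/negP => h; move: (gle_R h hxlr) => /negP; apply.
  apply: gleI => u hu.
  + by apply: (@notgle_L y'); rewrite /= mem_cat hu orbT.
  + apply/negP => h2; by move: (ry _ hu); rewrite (gle_trans h2 hrev).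
Qed.

Lemma bypassR L R xr xrl : xr \in R -> xrl \in Lopts xr -> gle (Game L R) xrl ->
  eqv (Game L (rem xr R ++ Ropts xrl)) (Game L R).
Proof.
set y := Game L R; set y' := Game L _ => hxr hxrl hrev.
have ly : forall l, l \in L -> ~~ gle y l by move=> l hl; exact: (@notgle_L y).
have ly' : forall l, l \in L -> ~~ gle y' l by move=> l hl; exact: (@notgle_L y').
split.
- apply: gleI => t ht; first exact: ly.
  case: (eqVneq t xr) => [->|hne]; last first.
    by apply: (@notgle_R y'); rewrite /= mem_cat mem_rem_neq.
  apply/negP => h; move: (gle_L h hxrl) => /negP; apply.
  apply: gleI => u hu.
  + apply/negP => h2; by move: (ly _ hu); rewrite (gle_trans hrev h2).
  + by apply: (@notgle_R y'); rewrite /= mem_cat hu orbT.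
- apply: gleI => t ht; first exact: ly'.
  move: ht; rewrite /= mem_cat => /orP [/mem_rem ht|ht].
  + exact: (@notgle_R y).
  + apply/negP => h; by move: (notgle_R ht); rewrite (gle_trans h hrev).
Qed.

Lemma step L R : all canonical L -> all canonical R ->
  ~~ [&& no_dominated_left (Game L R), no_dominated_right (Game L R) & no_reversible (Game L R)] ->
  exists y', [/\ mu y' < mu (Game L R), all canonical (Lopts y'), all canonical (Ropts y') &
                 eqv y' (Game L R)].
Proof.
move=> hL hR; rewrite !negb_and => /orP [hd|/orP [hd|hr]].
- move: hd; rewrite /no_dominated_left /= => /forallPn [i] /forallPn [j].
  rewrite negb_imply negbK => /andP [hij hle].
  have hji : (nat_of_ord j != nat_of_ord i) by rewrite eq_sym.
  exists (Game (del i L) R); split.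
  + rewrite /mu /= [X in _ < X + _](sum_del (ltn_ord i)); have := w_pos (nth zero L i); lia.
  + by apply/allP => x /del_sub; apply: (allP hL).
  + by [].
  + split; apply: gle_mono => /=.
    * by move=> xl /del_sub h; exists xl => //; apply: gle_refl.
    * by move=> yr h; exists yr => //; apply: gle_refl.
    * move=> xl; rewrite (perm_mem (del_perm (ltn_ord i))) in_cons => /orP [/eqP ->|h].
        by exists (nth zero L j) => //; apply: del_mem.
      by exists xl => //; apply: gle_refl.
    * by move=> yr h; exists yr => //; apply: gle_refl.
- move: hd; rewrite /no_dominated_right /= => /forallPn [i] /forallPn [j].
  rewrite negb_imply negbK => /andP [hij hle].
  have hji : (nat_of_ord j != nat_of_ord i) by rewrite eq_sym.
  exists (Game L (del i R)); split.
  + rewrite /mu /= [X in _ < _ + X](sum_del (ltn_ord i)); have := w_pos (nth zero R i); lia.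
  + by [].
  + by apply/allP => x /del_sub; apply: (allP hR).
  + split; apply: gle_mono => /=.
    * by move=> xl h; exists xl => //; apply: gle_refl.
    * move=> yr; rewrite (perm_mem (del_perm (ltn_ord i))) in_cons => /orP [/eqP ->|h].
        by exists (nth zero R j) => //; apply: del_mem.
      by exists yr => //; apply: gle_refl.
    * by move=> xl h; exists xl => //; apply: gle_refl.
    * by move=> yr /del_sub h; exists yr => //; apply: gle_refl.
- move: hr; rewrite /no_reversible /= => /orP [|].
  + move/allPn => [xl hxl]; rewrite negbK => /hasP [xlr hxlr hle].
    exists (Game (rem xl L ++ Lopts xlr) R); split.
    * rewrite /mu /= map_cat sumn_cat [X in _ < X + _](sum_rem hxl).
      have := w_bypassL hxlr; lia.
    * rewrite /= all_cat; apply/andP; split.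
        by apply/allP => x /mem_rem; apply: (allP hL).
      have := canon_opts (allP hL _ hxl) => /andP [_ /allP h].
      by have := canon_opts (h _ hxlr) => /andP [-> _].
    * by [].
    * exact: bypassL.
  + move/allPn => [xr hxr]; rewrite negbK => /hasP [xrl hxrl hle].
    exists (Game L (rem xr R ++ Ropts xrl)); split.
    * rewrite /mu /= map_cat sumn_cat [X in _ < _ + X](sum_rem hxr).
      have := w_bypassR hxrl; lia.
    * by [].
    * rewrite /= all_cat; apply/andP; split.
        by apply/allP => x /mem_rem; apply: (allP hR).
      have := canon_opts (allP hR _ hxr) => /andP [/allP h _].
      by have := canon_opts (h _ hxrl) => /andP [_ ->].
    * exact: bypassR.
Qed.

Lemma loop n y : mu y <= n -> all canonical (Lopts y) -> all canonical (Ropts y) ->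
  exists c, canonical c /\ eqv c y.
Proof.
elim: n y => [|n IH] [L R] hmu hL hR;
  (have [hc|hnc] := boolP [&& no_dominated_left (Game L R), no_dominated_right (Game L R)
                          & no_reversible (Game L R)];
   [exists (Game L R); split; [by rewrite /= hL hR | split; apply: gle_refl] |]);
  have [y' [hm h1 h2 [e1 e2]]] := step hL hR hnc; rewrite /= in hm e1 e2.
- exfalso; lia.
- have [c [hc [f1 f2]]] : exists c, canonical c /\ eqv c y' by apply: IH => //; lia.
  exists c; split => //; split; [exact: gle_trans f1 e1 | exact: gle_trans e2 f2].
Qed.

Lemma choose_list (P : game -> game -> Prop) (s : seq game) :
  (forall x, x \in s -> exists y, P x y) ->
  exists s' : seq game, (forall x, x \in s -> exists2 y, y \in s' & P x y) /\
             (forall y, y \in s' -> exists2 x, x \in s & P x y).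
Proof.
elim: s => [|a s IH] h.
  by exists (Nil game); split.
have [|s' [h1 h2]] := IH; first by move=> x hx; apply: h; rewrite in_cons hx orbT.
have [b hb] := h a (mem_head _ _).
exists (b :: s'); split.
- move=> x; rewrite in_cons => /orP [/eqP ->|hx]; first by exists b; rewrite ?mem_head.
  by case: (h1 _ hx) => y hy hp; exists y; rewrite ?in_cons ?hy ?orbT.
- move=> y; rewrite in_cons => /orP [/eqP ->|hy]; first by exists a; rewrite ?mem_head.
  by case: (h2 _ hy) => x hx hp; exists x; rewrite ?in_cons ?hx ?orbT.
Qed.

Lemma canon_exists x : exists c, canonical c /\ eqv c x.
Proof.
elim/game_ind2: x => L R HL HR.
have [L' [hL1 hL2]] := @choose_list (fun x c => canonical c /\ eqv c x) L
  (fun x hx => HL x (proj2 (InP _ _) hx)).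
have [R' [hR1 hR2]] := @choose_list (fun x c => canonical c /\ eqv c x) R
  (fun x hx => HR x (proj2 (InP _ _) hx)).
have [||c [hc [f1 f2]]] := @loop _ (Game L' R') (leqnn _).
- by apply/allP => y /hL2 [x _ []].
- by apply/allP => y /hR2 [x _ []].
exists c; split => //; split.
- apply: (gle_trans f1); apply: gle_mono => /=.
  + by move=> y /hL2 [x hx [_ [h _]]]; exists x.
  + by move=> x /hR1 [y hy [_ [h _]]]; exists y.
- apply: gle_trans f2; apply: gle_mono => /=.
  + by move=> x /hL1 [y hy [_ [_ h]]]; exists y.
  + by move=> y /hR2 [x hx [_ [_ h]]]; exists x.
Qed.

Lemma numL x xl : is_number x -> xl \in Lopts x -> gle xl x.
Proof. by case/andP => /allP h _ /h /andP []. Qed.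
Lemma numR x xr : is_number x -> xr \in Ropts x -> gle x xr.
Proof. by case/andP => _ /allP h /h /andP []. Qed.

Lemma notgle_cases x y : ~~ gle x y ->
  (exists2 xl, xl \in Lopts x & gle y xl) \/ (exists2 yr, yr \in Ropts y & gle yr x).
Proof.
rewrite gle_char negb_and => /orP [/allPn [xl h /negbNE h1]|/allPn [yr h /negbNE h1]].
- by left; exists xl.
- by right; exists yr.
Qed.

Lemma num_total x y : is_number x -> is_number y -> gle x y || gle y x.
Proof.
move=> nx ny; case hxy: (gle x y) => //=.
case: (notgle_cases (negbT hxy)) => [[xl hxl h]|[yr hyr h]].
- exact: gle_trans h (numL nx hxl).
- exact: gle_trans (numR ny hyr) h.
Qed.

Lemma max_exists (s : seq game) : s != [::] -> (forall x, x \in s -> is_number x) ->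
  exists2 m, m \in s & forall x, x \in s -> gle x m.
Proof.
elim: s => [//|a s IH] _ hn.
have na : is_number a by apply: hn; rewrite mem_head.
case: (eqVneq s [::]) => [->|hs].
  by exists a; rewrite ?mem_head // => x; rewrite in_cons orbF => /eqP ->; apply: gle_refl.
have [|m hm hmax] := IH hs; first by move=> x hx; apply: hn; rewrite in_cons hx orbT.
have nm : is_number m by apply: hn; rewrite in_cons hm orbT.
case/orP: (num_total na nm) => h.
- exists m; first by rewrite in_cons hm orbT.
  by move=> x; rewrite in_cons => /orP [/eqP ->//|/hmax].
- exists a; first by rewrite mem_head.
  move=> x; rewrite in_cons => /orP [/eqP ->|/hmax hx]; first exact: gle_refl.
  exact: gle_trans hx h.
Qed.

Lemma min_exists (s : seq game) : s != [::] -> (forall x, x \in s -> is_number x) ->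
  exists2 m, m \in s & forall x, x \in s -> gle m x.
Proof.
elim: s => [//|a s IH] _ hn.
have na : is_number a by apply: hn; rewrite mem_head.
case: (eqVneq s [::]) => [->|hs].
  by exists a; rewrite ?mem_head // => x; rewrite in_cons orbF => /eqP ->; apply: gle_refl.
have [|m hm hmin] := IH hs; first by move=> x hx; apply: hn; rewrite in_cons hx orbT.
have nm : is_number m by apply: hn; rewrite in_cons hm orbT.
case/orP: (num_total na nm) => h.
- exists a; first by rewrite mem_head.
  move=> x; rewrite in_cons => /orP [/eqP ->|/hmin hx]; first exact: gle_refl.
  exact: gle_trans h hx.
- exists m; first by rewrite in_cons hm orbT.
  by move=> x; rewrite in_cons => /orP [/eqP ->//|/hmin].
Qed.

Lemma canon_norev c : canonical c -> no_reversible c.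
Proof. by case: c => L R /= /and5P []. Qed.

Lemma canon_number m c : is_number m -> canonical c -> eqv c m -> is_number c.
Proof.
move=> nm cc [hcm hmc]; move: (canon_norev cc); rewrite /no_reversible => /andP [/allP r1 /allP r2].
apply/andP; split; apply/allP => t ht; apply/andP; split.
- case: (notgle_cases (gle_L hcm ht)) => [[ml hml h]|[tr htr h]].
  + exact: gle_trans (gle_trans h (numL nm hml)) hmc.
  + by move: (r1 _ ht) => /hasP; case; exists tr => //; apply: gle_trans h hmc.
- exact: notgle_L.
- case: (notgle_cases (gle_R hmc ht)) => [[tl htl h]|[mr hmr h]].
  + by move: (r2 _ ht) => /hasP; case; exists tl => //; apply: gle_trans hcm h.
  + exact: gle_trans hcm (gle_trans (numR nm hmr) h).
- exact: notgle_R.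
Qed.

Unset Implicit Arguments.
Theorem proposition2p8 (G : game) :
  (forall g, List.In g (Lopts G) -> is_number g) ->
  (forall g, List.In g (Ropts G) -> is_number g) ->
  Lopts G <> [::] -> Ropts G <> [::] ->
  exists a b : game,
    [/\ is_number a, canonical a, is_number b, canonical b &
        eqdom G (Game [:: a] [:: b])].
Proof.
case: G => L R /= hL hR hL0 hR0.
have [m hm hmax] := @max_exists L (introN eqP hL0) (fun x hx => hL x (proj2 (InP _ _) hx)).
have [n hn hmin] := @min_exists R (introN eqP hR0) (fun x hx => hR x (proj2 (InP _ _) hx)).
have nm : is_number m := hL m (proj2 (InP _ _) hm).
have nn : is_number n := hR n (proj2 (InP _ _) hn).
have [a [ca [am ma]]] := canon_exists m.
have [b [cb [bn nb]]] := canon_exists n.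
exists a, b; split => //; first exact: (canon_number nm).
  exact: (canon_number nn).
rewrite /eqdom /=; split; [|split; [|split]].
- move=> gl /InP hgl; exists (neg a); first by left.
  exact: gle_trans (hmax _ hgl) ma.
- move=> l [<-|[]]; exists n; first exact/InP.
  exact: nb.
- move=> gr /InP hgr; exists (neg b); first by left.
  by rewrite lsec_add_neg; apply: gle_trans bn (hmin _ hgr).
- move=> r [<-|[]]; exists m; first exact/InP.
  by rewrite lsec_add_neg.
Qed.
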